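(* Let $r\ge1$, $\mu\in\mathcal P_r$, and let $\mathbf x_n\in\Xi_n$ for every $n\in\mathbb N$. Let $d_r(\delta^\bullet_{\mathbf x_n},\mu)=\min_{\mathbf p\in\Pi_n}d_r(\delta^{\mathbf p}_{\mathbf x_n},\mu)$. Then $\lim_{n\to\infty}d_r(\delta^\bullet_{\mathbf x_n},\mu)=0$ if and only if $$\lim_{n\to\infty}\min_{1\le i\le n}|x-x_{n,i}|=0\quad\text{for every }x\in{\rm supp}\,\mu .$$ In particular, this condition holds whenever $\lim_{n\to\infty}\big(F_\mu(x_{n,1})+\max_{1\le i\le n-1}(x_{n,i+1}-x_{n,i})+1-F_\mu(x_{n,n})\big)=0$.
   Context: $\mathcal P$ denotes the set of Borel probability measures on $\mathbb R$; $\mathcal P_r=\{\mu\in\mathcal P:\int|x|^r{\rm d}\mu(x)<\infty\}$. For $\mu\in\mathcal P$, $F_\mu(x)=\mu(]-\infty,x])$ and $F_\mu^{-1}(t)=\sup\{x: F_\mu(x)\le t\}$, $t\in]0,1[$; ${\rm supp}\,\mu$ is the support (smallest closed set of full measure). $d_r(\mu,\nu)=\big(\int_0^1|F_\mu^{-1}(t)-F_\nu^{-1}(t)|^r{\rm d}t\big)^{1/r}$ on $\mathcal P_r$. $\Xi_n=\{\mathbf x\in\mathbb R^n:x_1\le\dots\le x_n\}$, $\Pi_n=\{\mathbf p\in\mathbb R^n:p_i\ge0,\sum_ip_i=1\}$, $\delta^{\mathbf p}_{\mathbf x}=\sum_{i=1}^np_i\delta_{x_i}$; the minimum over $\Pi_n$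 is attained. *)

(* Defs.v *)
From Stdlib Require Import Reals Lra List ClassicalEpsilon.
Open Scope R_scope.

(* A Borel probability measure on R is represented by its distribution function F = F_mu. *)
Definition is_cdf (F : R -> R) : Prop :=
  (forall x y, x <= y -> F x <= F y) /\
  (forall x eps, 0 < eps -> exists delta, 0 < delta /\
       forall y, x <= y < x + delta -> F y - F x < eps) /\
  (forall eps, 0 < eps -> exists M, forall x, x <= M -> Rabs (F x) < eps) /\
  (forall eps, 0 < eps -> exists M, forall x, M <= x -> Rabs (F x - 1) < eps).

(* F^{-1}(t) = sup {x : F x <= t}  (meaningful for t in ]0,1[) *)
Definition quantile (F : R -> R) (t : R) : R :=
  epsilon (inhabits 0) (fun m => is_lub (fun y => F y <= t) m).

Definition rpow (x y : R) : R := if Rle_dec x 0 then 0 else Rpower x y.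

(* I is the (possibly improper) integral over ]0,1[ of the nonnegative function g:
   g is Riemann integrable on every [a,b] ⊂ ]0,1[ and I is the supremum of these integrals *)
Definition Int01 (g : R -> R) (I : R) : Prop :=
  (forall a b, 0 < a -> a <= b -> b < 1 ->
     exists pr : Riemann_integrable g a b, RiemannInt pr <= I) /\
  (forall eps, 0 < eps -> exists a b, 0 < a /\ a <= b /\ b < 1 /\
     exists pr : Riemann_integrable g a b, I - eps < RiemannInt pr).

(* mu in P_r : int |x|^r dmu = int_0^1 |F^{-1}(t)|^r dt < infinity *)
Definition in_Pr (r : R) (F : R -> R) : Prop :=
  is_cdf F /\ exists I, Int01 (fun t => rpow (Rabs (quantile F t)) r) I.

Definition dr (r : R) (F G : R -> R) (d : R) : Prop :=
  exists I, Int01 (fun t => rpow (Rabs (quantile F t - quantile G t)) r) I /\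
            d = rpow I (1 / r).

(* supp mu: x such that every open neighbourhood has positive measure *)
Definition in_supp (F : R -> R) (x : R) : Prop :=
  forall eps, 0 < eps -> F (x - eps) < F (x + eps).

Definition fsum (n : nat) (f : nat -> R) : R := fold_right Rplus 0 (map f (seq 0 n)).

(* Xi_n: x_0 <= ... <= x_{n-1}  (0-based indexing) *)
Definition in_Xi (n : nat) (x : nat -> R) : Prop :=
  forall i, (S i < n)%nat -> x i <= x (S i).

Definition in_Pi (n : nat) (p : nat -> R) : Prop :=
  (forall i, (i < n)%nat -> 0 <= p i) /\ fsum n p = 1.

(* distribution function of delta_x^p = sum_i p_i delta_{x_i} *)
Definition dcdf (n : nat) (x p : nat -> R) (y : R) : R :=
  fsum n (fun i => if Rle_dec (x i) y then p i else 0).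

Definition is_min_dist (r : R) (n : nat) (x : nat -> R) (F : R -> R) (m : R) : Prop :=
  (exists p d, in_Pi n p /\ dr r (dcdf n x p) F d /\ m = d) /\
  (forall p d, in_Pi n p -> dr r (dcdf n x p) F d -> m <= d).

(* max_{1<=i<=n-1} (x_{i+1} - x_i), with value 0 for n <= 1 *)
Definition maxgap (n : nat) (x : nat -> R) : R :=
  fold_right Rmax 0 (map (fun i => x (S i) - x i) (seq 0 (n - 1))).

Definition approx_supp (F : R -> R) (x : nat -> nat -> R) : Prop :=
  forall y, in_supp F y ->
    forall eps, 0 < eps -> exists N, forall n, (n >= N)%nat ->
      exists i, (i < n)%nat /\ Rabs (y - x n i) < eps.

(* Main.v *)
Require Import Defs.
From Stdlib Require Import Reals RList Lra Lia List Arith ClassicalEpsilon Classical.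
Open Scope R_scope.


Lemma rpow_nonneg x y : 0 <= rpow x y.
Proof. unfold rpow, Rpower; destruct (Rle_dec x 0); [lra|]. left; apply exp_pos. Qed.

Lemma rpow_pos x y : 0 < x -> 0 < rpow x y.
Proof. intros H; unfold rpow, Rpower; destruct (Rle_dec x 0); [lra|]. apply exp_pos. Qed.

Lemma rpow_lt x x' e : 0 < e -> 0 <= x -> x < x' -> rpow x e < rpow x' e.
Proof.
  intros He Hx Hxx; unfold rpow, Rpower.
  destruct (Rle_dec x' 0); [lra|].
  destruct (Rle_dec x 0). apply exp_pos.
  apply exp_increasing. apply Rmult_lt_compat_l; auto. apply ln_increasing; lra.
Qed.

Lemma rpow_le x x' e : 0 < e -> 0 <= x -> x <= x' -> rpow x e <= rpow x' e.
Proof.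
  intros He Hx [H|H]. left; apply rpow_lt; auto. subst; lra.
Qed.

Lemma rpow_lt_inv x x' e : 0 < e -> 0 <= x -> 0 <= x' -> rpow x e < rpow x' e -> x < x'.
Proof.
  intros He Hx Hx' H. destruct (Rlt_le_dec x x'); auto.
  assert (rpow x' e <= rpow x e) by (apply rpow_le; auto). lra.
Qed.

Lemma rpow_le_inv x x' e : 0 < e -> 0 <= x -> 0 <= x' -> rpow x e <= rpow x' e -> x <= x'.
Proof.
  intros He Hx Hx' H. destruct (Rle_lt_dec x x'); auto.
  assert (rpow x' e < rpow x e) by (apply rpow_lt; auto). lra.
Qed.

Lemma rpow_inv x e : 0 < e -> 0 <= x -> rpow (rpow x e) (1/e) = x.
Proof.
  intros He Hx. destruct Hx as [Hx|Hx].
  - assert (H0 := rpow_pos x e Hx). unfold rpow at 1.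
    destruct (Rle_dec (rpow x e) 0); [lra|].
    unfold rpow. destruct (Rle_dec x 0); [lra|].
    rewrite Rpower_mult. replace (e * (1/e)) with 1 by (field; lra).
    apply Rpower_1; auto.
  - subst. unfold rpow. destruct (Rle_dec 0 0); [|lra]. destruct (Rle_dec 0 0); lra.
Qed.

Lemma rpow_mult x y e : 0 <= x -> 0 <= y -> rpow (x*y) e = rpow x e * rpow y e.
Proof.
  intros Hx Hy. destruct Hx as [Hx|Hx]; [destruct Hy as [Hy|Hy]|].
  - unfold rpow. destruct (Rle_dec (x*y) 0). nra.
    destruct (Rle_dec x 0); [lra|]. destruct (Rle_dec y 0); [lra|].
    symmetry; apply Rpower_mult_distr; auto.
  - subst. rewrite Rmult_0_r. unfold rpow at 1 3. destruct (Rle_dec 0 0); lra.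
  - subst. rewrite Rmult_0_l. unfold rpow at 1 2. destruct (Rle_dec 0 0); lra.
Qed.

Lemma rpow_0 e : rpow 0 e = 0.
Proof. unfold rpow; destruct (Rle_dec 0 0); lra. Qed.

Lemma rpow_diff_bound u v e : 0 < e ->
  rpow (Rabs (u - v)) e <= rpow 2 e * (rpow (Rabs u) e + rpow (Rabs v) e).
Proof.
  intros He.
  assert (Rabs (u - v) <= 2 * Rmax (Rabs u) (Rabs v)).
  { unfold Rminus. eapply Rle_trans. apply Rabs_triang. rewrite Rabs_Ropp.
    assert (H1 := Rmax_l (Rabs u) (Rabs v)). assert (H2 := Rmax_r (Rabs u) (Rabs v)). lra. }
  eapply Rle_trans. apply rpow_le; [auto|apply Rabs_pos|exact H].
  assert (0 <= Rmax (Rabs u) (Rabs v)) by (unfold Rmax; destruct Rle_dec; apply Rabs_pos).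
  rewrite rpow_mult by lra.
  apply Rmult_le_compat_l. apply rpow_nonneg.
  unfold Rmax; destruct Rle_dec.
  - assert (0 <= rpow (Rabs u) e) by apply rpow_nonneg; lra.
  - assert (0 <= rpow (Rabs v) e) by apply rpow_nonneg; lra.
Qed.

Lemma rpow_cont e : 0 < e -> forall y, continuity_pt (fun z => rpow (Rabs z) e) y.
Proof.
  intros He y.
  destruct (Req_dec y 0) as [Hy|Hy].
  - subst. unfold continuity_pt, continue_in, limit1_in, limit_in. intros eps Heps.
    exists (rpow eps (1/e)). split.
    + apply rpow_pos; lra.
    + intros z [_ Hz]. simpl in *. unfold R_dist in *.
      rewrite Rminus_0_r in Hz. rewrite Rabs_R0, rpow_0, Rminus_0_r.
      rewrite Rabs_pos_eq by apply rpow_nonneg.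
      replace eps with (rpow (rpow eps (1/e)) e).
      * apply rpow_lt; auto. apply Rabs_pos.
      * unfold rpow. destruct (Rle_dec eps 0); [lra|].
        destruct (Rle_dec (Rpower eps (1/e)) 0).
        { exfalso. assert (0 < Rpower eps (1/e)) by (unfold Rpower; apply exp_pos). lra. }
        rewrite Rpower_mult. replace (1/e*e) with 1 by (field; lra). apply Rpower_1; lra.
  - assert (Hay : 0 < Rabs y) by (apply Rabs_pos_lt; auto).
    apply continuity_pt_locally_ext with
      (f := comp exp (comp (fun w => e * w) (comp ln Rabs))) (a := Rabs y); auto.
    + intros z Hz. unfold comp, rpow, Rpower. destruct (Rle_dec (Rabs z) 0); [|reflexivity].
      exfalso. assert (Rabs z = 0) by (assert (0 <= Rabs z) by apply Rabs_pos; lra).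
      assert (z = 0) by (destruct (Req_dec z 0); auto; exfalso; apply Rabs_no_R0 in H0; auto). subst. unfold Rdist in Hz. rewrite Rminus_0_l, Rabs_Ropp in Hz. lra.
    + apply continuity_pt_comp. apply continuity_pt_comp. apply continuity_pt_comp.
      * apply Rcontinuity_abs.
      * apply derivable_continuous_pt. exists (/ Rabs y). apply derivable_pt_lim_ln; auto.
      * apply continuity_pt_scal with (f := id). apply derivable_continuous_pt, derivable_pt_id.
      * apply derivable_continuous_pt. apply derivable_pt_exp.
Qed.


Definition qchar (G : R -> R) (t q : R) : Prop :=
  (forall y, y < q -> G y <= t) /\ (forall y, q < y -> t < G y).

Lemma quant_char G t q : qchar G t q -> quantile G t = q.
Proof.
  intros [H1 H2].
  assert (L : is_lub (fun y => G y <= t) q).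
  { split.
    - intros y Hy. destruct (Rle_lt_dec y q); auto. specialize (H2 y r). lra.
    - intros u Hu. destruct (Rle_lt_dec q u); auto.
      assert (Hm : (u + q)/2 <= u) by (apply Hu; apply H1; lra). lra. }
  unfold quantile. apply is_lub_u with (fun y => G y <= t); auto.
  apply epsilon_spec. eauto.
Qed.

Lemma qchar_mono G t t' q q' : t <= t' -> qchar G t q -> qchar G t' q' -> q <= q'.
Proof.
  intros Ht [A1 A2] [B1 B2]. destruct (Rle_lt_dec q q'); auto.
  specialize (A1 ((q+q')/2)). specialize (B2 ((q+q')/2)). 
  assert (G ((q+q')/2) <= t) by (apply A1; lra).
  assert (t' < G ((q+q')/2)) by (apply B2; lra). lra.
Qed.


Lemma cdf_mono (F : R -> R) (HF : is_cdf F) x y : x <= y -> F x <= F y.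
Proof. destruct HF as [H _]; auto. Qed.

Lemma cdf_ge0 (F : R -> R) (HF : is_cdf F) x : 0 <= F x.
Proof.
  destruct HF as [Hm [_ [Hl _]]]. destruct (Rle_lt_dec 0 (F x)); auto.
  destruct (Hl (- F x)) as [M HM]; [lra|].
  assert (H1 := HM (Rmin M x) (Rmin_l _ _)).
  assert (H2 := Hm _ _ (Rmin_r M x)).
  unfold Rabs in H1; destruct Rcase_abs in H1; lra.
Qed.

Lemma cdf_le1 (F : R -> R) (HF : is_cdf F) x : F x <= 1.
Proof.
  destruct HF as [Hm [_ [_ Hu]]]. destruct (Rle_lt_dec (F x) 1); auto.
  destruct (Hu (F x - 1)) as [M HM]; [lra|].
  assert (H1 := HM (Rmax M x) (Rmax_l _ _)).
  assert (H2 := Hm _ _ (Rmax_r M x)).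
  unfold Rabs in H1; destruct Rcase_abs in H1; lra.
Qed.

Lemma cdf_qchar (F : R -> R) (HF : is_cdf F) t : 0 < t < 1 -> qchar F t (quantile F t).
Proof.
  intros Ht. destruct HF as [Hm [_ [Hl Hu]]].
  set (S := fun y => F y <= t).
  assert (Hne : exists y, S y).
  { destruct (Hl t) as [M HM]; [lra|]. exists M. unfold S.
    specialize (HM M (Rle_refl _)). unfold Rabs in HM; destruct Rcase_abs in HM; lra. }
  assert (Hb : bound S).
  { destruct (Hu (1 - t)) as [M HM]; [lra|]. exists M. intros y Hy. unfold S in Hy.
    destruct (Rle_lt_dec y M); auto. specialize (HM y (Rlt_le _ _ r)).
    unfold Rabs in HM; destruct Rcase_abs in HM; lra. }
  destruct (completeness S Hb Hne) as [q Hq].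
  assert (C : qchar F t q).
  { split.
    - intros y Hy. apply NNPP. intros Hn.
      assert (is_upper_bound S y).
      { intros w Hw. unfold S in Hw. destruct (Rle_lt_dec w y); auto.
        exfalso. apply Hn. assert (F y <= F w) by (apply Hm; lra). lra. }
      destruct Hq as [_ Hq]. specialize (Hq y H). lra.
    - intros y Hy. destruct (Rle_lt_dec (F y) t); auto.
      destruct Hq as [Hq _]. specialize (Hq y r). lra. }
  rewrite (quant_char _ _ _ C). exact C.
Qed.

Lemma quant_ge (F : R -> R) (HF : is_cdf F) t z : 0 < t < 1 -> F z <= t -> z <= quantile F t.
Proof.
  intros Ht Hz. destruct (cdf_qchar F HF t Ht) as [_ H2].
  destruct (Rle_lt_dec z (quantile F t)); auto. specialize (H2 z r). lra.
Qed.

Lemma quant_le (F : R -> R) (HF : is_cdf F) t z : 0 < t < 1 -> t < F z -> quantile F t <= z.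
Proof.
  intros Ht Hz. destruct (cdf_qchar F HF t Ht) as [H1 _].
  destruct (Rle_lt_dec (quantile F t) z); auto. specialize (H1 z r). lra.
Qed.

Lemma quant_mono (F : R -> R) (HF : is_cdf F) t t' : 0 < t < 1 -> 0 < t' < 1 -> t <= t' -> quantile F t <= quantile F t'.
Proof. intros; eapply qchar_mono; eauto; apply cdf_qchar; auto. Qed.

Lemma quant_supp (F : R -> R) (HF : is_cdf F) t : 0 < t < 1 -> in_supp F (quantile F t).
Proof.
  intros Ht e He. destruct (cdf_qchar F HF t Ht) as [H1 H2].
  specialize (H1 (quantile F t - e)). specialize (H2 (quantile F t + e)).
  assert (F (quantile F t - e) <= t) by (apply H1; lra).
  assert (t < F (quantile F t + e)) by (apply H2; lra). lra.
Qed.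


Lemma fsum_0 f : fsum 0 f = 0.
Proof. reflexivity. Qed.

Lemma fsum_S n f : fsum (S n) f = fsum n f + f n.
Proof.
  unfold fsum. rewrite seq_S, map_app, fold_right_app. simpl.
  generalize (map f (seq 0 n)). intros l. replace (f n + 0) with (f n) by ring.
  induction l; simpl. ring. rewrite IHl. ring.
Qed.

Lemma fsum_le n f g : (forall i, (i < n)%nat -> f i <= g i) -> fsum n f <= fsum n g.
Proof.
  induction n; intros H. rewrite !fsum_0; lra.
  rewrite !fsum_S. assert (f n <= g n) by (apply H; lia).
  assert (fsum n f <= fsum n g) by (apply IHn; intros; apply H; lia). lra.
Qed.

Lemma fsum_ext n f g : (forall i, (i < n)%nat -> f i = g i) -> fsum n f = fsum n g.
Proof.
  induction n; intros H. reflexivity.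
  rewrite !fsum_S. rewrite H by lia. rewrite IHn; auto.
Qed.

Lemma fsum_trunc n k f : (k <= n)%nat ->
  fsum n (fun i => if lt_dec i k then f i else 0) = fsum k f.
Proof.
  induction n; intros H.
  - replace k with 0%nat by lia. reflexivity.
  - destruct (Nat.eq_dec k (S n)).
    + subst. rewrite !fsum_S. destruct (lt_dec n (S n)); [|lia].
      f_equal. apply fsum_ext. intros i Hi. destruct lt_dec; [reflexivity|lia].
    + rewrite fsum_S, IHn by lia. destruct lt_dec; [lia|]. ring.
Qed.

Lemma fsum_nonneg n f : (forall i, (i < n)%nat -> 0 <= f i) -> 0 <= fsum n f.
Proof.
  intros H. replace 0 with (fsum n (fun _ => 0)).
  apply fsum_le; auto. induction n. reflexivity. rewrite fsum_S, IHn. ring.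
  intros; apply H; lia.
Qed.

Lemma fsum_mono_n k n f : (k <= n)%nat -> (forall i, (i < n)%nat -> 0 <= f i) ->
  fsum k f <= fsum n f.
Proof.
  intros Hk H. induction n.
  - replace k with 0%nat by lia. lra.
  - destruct (Nat.eq_dec k (S n)). subst; lra.
    rewrite fsum_S. assert (0 <= f n) by (apply H; lia).
    assert (fsum k f <= fsum n f) by (apply IHn; [lia|intros; apply H; lia]). lra.
Qed.

Lemma xi_mono n x : in_Xi n x -> forall i j, (i <= j)%nat -> (j < n)%nat -> x i <= x j.
Proof.
  intros H i j Hij Hj. induction j.
  - replace i with 0%nat by lia. lra.
  - destruct (Nat.eq_dec i (S j)). subst; lra.
    assert (x i <= x j) by (apply IHj; lia). assert (x j <= x (S j)) by (apply H; lia). lra.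
Qed.

Lemma dcdf_qchar n x p t k : in_Xi n x -> in_Pi n p -> (k < n)%nat ->
  fsum k p <= t < fsum (S k) p -> qchar (dcdf n x p) t (x k).
Proof.
  intros Hx [Hp0 Hp1] Hk [Ht1 Ht2]. split.
  - intros y Hy. unfold dcdf. rewrite <- (fsum_trunc n k p) in Ht1 by lia.
    eapply Rle_trans; [|exact Ht1]. apply fsum_le. intros i Hi.
    destruct (Rle_dec (x i) y); destruct (lt_dec i k); try lra.
    + exfalso. assert (x k <= x i) by (apply (xi_mono n); auto; lia). lra.
    + apply Hp0; auto.
  - intros y Hy. unfold dcdf. rewrite <- (fsum_trunc n (S k) p) in Ht2 by lia.
    eapply Rlt_le_trans; [exact Ht2|]. apply fsum_le. intros i Hi.
    destruct (Rle_dec (x i) y); destruct (lt_dec i (S k)); try lra.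
    + apply Hp0; auto.
    + exfalso. assert (x i <= x k) by (apply (xi_mono n); auto; lia). lra.
Qed.

Lemma find_k n p t : 0 <= t -> t < fsum n p ->
  exists k, (k < n)%nat /\ fsum k p <= t < fsum (S k) p.
Proof.
  induction n; intros H0 H1.
  - rewrite fsum_0 in H1. lra.
  - destruct (Rlt_le_dec t (fsum n p)).
    + destruct (IHn H0 r) as [k [Hk Hk']]. exists k; split; [lia|auto].
    + exists n. split; [lia|lra].
Qed.

Lemma dcdf_quant n x p t : in_Xi n x -> in_Pi n p -> 0 <= t < 1 ->
  exists k, (k < n)%nat /\ fsum k p <= t < fsum (S k) p /\
            qchar (dcdf n x p) t (x k) /\ quantile (dcdf n x p) t = x k.
Proof.
  intros Hx Hp Ht. destruct (find_k n p t) as [k [Hk Hk']]; try lra.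
  destruct Hp as [_ Hp1]. lra.
  exists k. assert (C := dcdf_qchar n x p t k Hx Hp Hk Hk').
  split; [auto|split; [auto|split; [auto|apply quant_char; auto]]].
Qed.


Lemma fold_max_ge l a : In a l -> a <= fold_right Rmax 0 l.
Proof.
  induction l; simpl; intros H. contradiction.
  destruct H. subst. apply Rmax_l. eapply Rle_trans; [apply IHl; auto|apply Rmax_r].
Qed.

Lemma fold_max_nonneg l : 0 <= fold_right Rmax 0 l.
Proof. induction l; simpl. lra. eapply Rle_trans; [apply IHl|apply Rmax_r]. Qed.

Lemma maxgap_ge n x i : (S i < n)%nat -> x (S i) - x i <= maxgap n x.
Proof.
  intros H. unfold maxgap. apply fold_max_ge.
  apply in_map_iff. exists i. split; auto. apply in_seq. lia.
Qed.

Lemma maxgap_nonneg n x : 0 <= maxgap n x.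
Proof. apply fold_max_nonneg. Qed.

Lemma discrete_ivt (x : nat -> R) y m : x 0%nat <= y -> y < x m ->
  exists i, (i < m)%nat /\ x i <= y < x (S i).
Proof.
  induction m; intros H1 H2. lra.
  destruct (Rlt_le_dec y (x m)).
  - destruct (IHm H1 r) as [i [Hi Hi']]. exists i. split; [lia|auto].
  - exists m. split; [lia|lra].
Qed.

Lemma part2 (F : R -> R) (x : nat -> nat -> R) : is_cdf F ->
  Un_cv (fun n => F (x n O) + maxgap n (x n) + 1 - F (x n (Nat.pred n))) 0 ->
  approx_supp F x.
Proof.
  intros HF Hcv y Hy eps Heps.
  set (e := eps/2).
  assert (He : 0 < e) by (unfold e; lra).
  assert (Hs := Hy e He).
  assert (H0 := cdf_ge0 F HF (y - e)). assert (H1 := cdf_le1 F HF (y + e)).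
  set (del := Rmin (F (y+e)) (Rmin (1 - F (y - e)) e)).
  assert (Hdel : 0 < del).
  { unfold del. repeat apply Rmin_pos; lra. }
  destruct (Hcv del Hdel) as [N HN]. exists (max N 1). intros n Hn.
  specialize (HN n ltac:(lia)). unfold R_dist in HN. rewrite Rminus_0_r in HN.
  assert (A0 := cdf_ge0 F HF (x n O)). assert (A1 := cdf_le1 F HF (x n (pred n))).
  assert (A2 := maxgap_nonneg n (x n)).
  rewrite Rabs_pos_eq in HN by lra.
  assert (D1 := Rmin_l (F (y+e)) (Rmin (1 - F (y - e)) e)).
  assert (D2 := Rmin_r (F (y+e)) (Rmin (1 - F (y - e)) e)).
  assert (D3 := Rmin_l (1 - F (y - e)) e). assert (D4 := Rmin_r (1 - F (y - e)) e).
  fold del in D1, D2.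
  assert (L0 : x n O < y + e).
  { destruct (Rlt_le_dec (x n O) (y+e)); auto. apply (cdf_mono F HF) in r. lra. }
  assert (L1 : y - e < x n (pred n)).
  { destruct (Rlt_le_dec (y - e) (x n (pred n))); auto. apply (cdf_mono F HF) in r. lra. }
  assert (LG : maxgap n (x n) < e) by lra.
  destruct (Rlt_le_dec y (x n O)).
  - exists O. split. lia. rewrite Rabs_left1 by lra. unfold e in *; lra.
  - destruct (Rle_lt_dec (x n (pred n)) y).
    + exists (pred n). split. lia. rewrite Rabs_pos_eq by lra. unfold e in *; lra.
    + destruct (discrete_ivt (x n) y (pred n) r r0) as [i [Hi Hi']].
      exists i. split. lia. assert (G := maxgap_ge n (x n) i ltac:(lia)).
      rewrite Rabs_pos_eq by lra. unfold e in *; lra.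
Qed.

Lemma dir1 (r : R) (F : R -> R) (x : nat -> nat -> R) (m : nat -> R) :
  1 <= r -> is_cdf F ->
  (forall n, (1 <= n)%nat -> in_Xi n (x n)) ->
  (forall n, (1 <= n)%nat -> is_min_dist r n (x n) F (m n)) ->
  Un_cv m 0 -> approx_supp F x.
Proof.
  intros Hr HF HX Hmin Hcv y Hy eps Heps.
  set (e := eps/2). assert (He : 0 < e) by (unfold e; lra).
  assert (Hs := Hy e He).
  assert (H0 := cdf_ge0 F HF (y - e)). assert (H1 := cdf_le1 F HF (y + e)).
  set (a0 := F (y - e)). set (b0 := F (y + e)). fold a0 b0 in Hs, H0, H1.
  set (a := a0 + (b0 - a0)/4). set (b := b0 - (b0 - a0)/4).
  set (c := (b - a) * rpow e r).
  assert (Hc : 0 < c).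
  { unfold c. apply Rmult_lt_0_compat. unfold a, b; lra. apply rpow_pos; auto. }
  assert (Hr1 : 0 < 1 / r) by (apply Rdiv_lt_0_compat; lra).
  set (del := rpow c (1/r)). assert (Hdel : 0 < del) by (apply rpow_pos; auto).
  destruct (Hcv del Hdel) as [N HN]. exists (max N 1). intros n Hn.
  specialize (HN n ltac:(lia)). unfold R_dist in HN. rewrite Rminus_0_r in HN.
  apply NNPP. intros Hno.
  assert (Far : forall i, (i < n)%nat -> eps <= Rabs (y - x n i)).
  { intros i Hi. destruct (Rle_lt_dec eps (Rabs (y - x n i))); auto.
    exfalso; apply Hno; exists i; auto. }
  destruct (Hmin n ltac:(lia)) as [[p [d [Hp [Hd Hmd]]]] _].
  destruct Hd as [I [[HI1 _] Hdd]].
  destruct (HI1 a b) as [pr Hpr]; try (unfold a, b; lra).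
  assert (Hlow : c <= RiemannInt pr).
  { assert (prc := RiemannInt_P14 a b (rpow e r)).
    assert (Hv := RiemannInt_P15 prc). unfold c. rewrite Rmult_comm, <- Hv.
    apply RiemannInt_P19. unfold a, b; lra.
    intros t [Ht1 Ht2]. unfold fct_cte.
    assert (Ht : 0 < t < 1) by (unfold a, b in *; lra).
    assert (Q1 : y - e <= quantile F t) by (apply quant_ge; auto; fold a0 b0; unfold a, b in *; lra).
    assert (Q2 : quantile F t <= y + e) by (apply quant_le; auto; fold a0 b0; unfold a, b in *; lra).
    destruct (dcdf_quant n (x n) p t (HX n ltac:(lia)) Hp ltac:(lra)) as [k [Hk [_ [_ Hq]]]].
    rewrite Hq. apply rpow_le. lra. lra.
    specialize (Far k Hk). unfold e in *.
    unfold Rabs in *; repeat destruct Rcase_abs; lra. }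
  assert (HI : c <= I) by lra.
  assert (del <= d).
  { rewrite Hdd. apply rpow_le; auto. lra. }
  assert (0 <= m n) by (rewrite Hmd, Hdd; apply rpow_nonneg).
  rewrite Rabs_pos_eq in HN by auto. lra.
Qed.


Lemma stepfun_transfer f g a b : IsStepFun f a b ->
  (forall t, Rmin a b < t < Rmax a b -> f t = g t) -> IsStepFun g a b.
Proof.
  intros [l [lf [H1 [H2 [H3 [H4 H5]]]]]] Hfg.
  exists l, lf. repeat split; auto.
  intros i Hi t Ht. unfold open_interval in Ht.
  rewrite <- (H5 i Hi t Ht). symmetry. apply Hfg.
  assert (H6 := proj1 (RList_P6 l) H1).
  assert (A : pos_Rl l 0 <= pos_Rl l i) by (apply H6; lia).
  assert (B : pos_Rl l (S i) <= pos_Rl l (pred (length l))) by (apply H6; lia).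
  lra.
Qed.

Lemma sf_int_eq a b (p q : StepFun a b) : a <= b ->
  (forall t, a < t < b -> p t = q t) -> RiemannInt_SF p = RiemannInt_SF q.
Proof.
  intros Hab H. apply Rle_antisym; apply StepFun_P37; auto; intros t Ht; rewrite H; auto; lra.
Qed.

Definition Approx (f : R -> R) (a b e : R) : Prop :=
  exists (phi psi : StepFun a b),
    (forall t, a <= t <= b -> Rabs (f t - phi t) <= psi t) /\ RiemannInt_SF psi <= e.

Lemma approx_glue f a b c e1 e2 : a <= b -> b <= c ->
  Approx f a b e1 -> Approx f b c e2 -> Approx f a c (e1 + e2).
Proof.
  intros Hab Hbc [p1 [s1 [Hp1 Hs1]]] [p2 [s2 [Hp2 Hs2]]].
  set (P := fun t => if Rle_dec t b then p1 t else p2 t).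
  set (S := fun t => if Rle_dec t b then s1 t else s2 t).
  assert (PA : IsStepFun P a b).
  { apply stepfun_transfer with (f := p1). apply pre.
    intros t Ht. rewrite Rmin_left, Rmax_right in Ht by auto. unfold P.
    destruct Rle_dec; auto; lra. }
  assert (PB : IsStepFun P b c).
  { apply stepfun_transfer with (f := p2). apply pre.
    intros t Ht. rewrite Rmin_left, Rmax_right in Ht by auto. unfold P.
    destruct Rle_dec; auto; lra. }
  assert (SA : IsStepFun S a b).
  { apply stepfun_transfer with (f := s1). apply pre.
    intros t Ht. rewrite Rmin_left, Rmax_right in Ht by auto. unfold S.
    destruct Rle_dec; auto; lra. }
  assert (SB : IsStepFun S b c).
  { apply stepfun_transfer with (f := s2). apply pre.
    intros t Ht. rewrite Rmin_left, Rmax_right in Ht by auto. unfold S.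
    destruct Rle_dec; auto; lra. }
  exists (mkStepFun (StepFun_P46 PA PB)), (mkStepFun (StepFun_P46 SA SB)). split.
  - intros t Ht. simpl. unfold P, S. destruct Rle_dec.
    + apply Hp1; lra.
    + apply Hp2; lra.
  - rewrite <- (StepFun_P43 SA SB).
    assert (E1 : RiemannInt_SF (mkStepFun SA) = RiemannInt_SF s1).
    { apply sf_int_eq; auto. intros t Ht. simpl. unfold S. destruct Rle_dec; auto; lra. }
    assert (E2 : RiemannInt_SF (mkStepFun SB) = RiemannInt_SF s2).
    { apply sf_int_eq; auto. intros t Ht. simpl. unfold S. destruct Rle_dec; auto; lra. }
    rewrite E1, E2. lra.
Qed.

Lemma approx_cell f s e w : s <= e -> (forall t, s <= t <= e -> Rabs (f t - f s) <= w) ->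
  Approx f s e (w * (e - s)).
Proof.
  intros Hse H.
  exists (mkStepFun (StepFun_P4 s e (f s))), (mkStepFun (StepFun_P4 s e w)). split.
  - intros t Ht. simpl. unfold fct_cte. apply H; auto.
  - rewrite StepFun_P18. lra.
Qed.

Lemma approx_grid f a h N (W : nat -> R) : 0 <= h ->
  (forall k, (k < N)%nat -> forall t, a + INR k * h <= t <= a + INR (S k) * h ->
     Rabs (f t - f (a + INR k * h)) <= W k) ->
  Approx f a (a + INR N * h) (h * fsum N W).
Proof.
  intros Hh. induction N; intros H.
  - simpl. rewrite fsum_0. replace (a + 0 * h) with a by ring. replace (h * 0) with (0 * (a - a)) by ring.
    apply approx_cell. lra. intros t Ht. replace t with a by lra. rewrite Rminus_diag, Rabs_R0. lra.
  - rewrite fsum_S. rewrite Rmult_plus_distr_l.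
    apply approx_glue with (a + INR N * h).
    + assert (0 <= INR N) by apply pos_INR. nra.
    + rewrite S_INR. lra.
    + apply IHN. intros k Hk. apply H. lia.
    + replace (h * W N) with (W N * (a + INR (S N) * h - (a + INR N * h))) by (rewrite S_INR; ring).
      apply approx_cell. rewrite S_INR; lra. apply H. lia.
Qed.

Lemma approx_RI f a b : a <= b -> (forall eps, 0 < eps -> exists e, e < eps /\ Approx f a b e) ->
  Riemann_integrable f a b.
Proof.
  intros Hab H eps.
  destruct (constructive_indefinite_description _ (H eps (cond_pos eps))) as [e [He HA]].
  destruct (constructive_indefinite_description _ HA) as [phi HA'].
  destruct (constructive_indefinite_description _ HA') as [psi [H1 H2]].
  exists phi, psi. rewrite Rmin_left, Rmax_right by auto. split; auto.
  assert (0 <= RiemannInt_SF psi).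
  { replace 0 with (RiemannInt_SF (mkStepFun (StepFun_P4 a b 0))).
    apply StepFun_P37; auto. intros t Ht. simpl. unfold fct_cte.
    eapply Rle_trans; [apply Rabs_pos|apply H1; lra].
    rewrite StepFun_P18. ring. }
  rewrite Rabs_pos_eq; auto. lra.
Qed.

Lemma fsum_telescope N (g : nat -> R) : fsum N (fun k => g (S k) - g k) = g N - g O.
Proof. induction N. rewrite fsum_0; ring. rewrite fsum_S, IHN. ring. Qed.

Lemma fsum_const N c : fsum N (fun _ => c) = INR N * c.
Proof. induction N. rewrite fsum_0; simpl; ring. rewrite fsum_S, IHN, S_INR. ring. Qed.

Lemma fsum_plus N f g : fsum N (fun k => f k + g k) = fsum N f + fsum N g.
Proof. induction N. rewrite !fsum_0; ring. rewrite !fsum_S, IHN. ring. Qed.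

Lemma fsum_scal N c f : fsum N (fun k => c * f k) = c * fsum N f.
Proof. induction N. rewrite !fsum_0; ring. rewrite !fsum_S, IHN. ring. Qed.

Lemma RI_comp (phi u v : R -> R) a b : a <= b ->
  (forall y, continuity_pt phi y) ->
  (forall s t, a <= s -> s <= t -> t <= b -> u s <= u t) ->
  (forall s t, a <= s -> s <= t -> t <= b -> v s <= v t) ->
  Riemann_integrable (fun t => phi (u t - v t)) a b.
Proof.
  intros Hab Hphi Hu Hv.
  apply approx_RI; auto. intros eps Heps.
  destruct (Req_dec a b) as [Heq|Hne].
  { subst. exists 0. split; auto. replace 0 with (0 * (b - b)) by ring.
    apply approx_cell. lra. intros t Ht. replace t with b by lra. rewrite Rminus_diag, Rabs_R0. lra. }
  assert (Hlt : a < b) by lra.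
  set (A := u a - v b). set (B := u b - v a).
  assert (HAB : A <= B).
  { unfold A, B. assert (u a <= u b) by (apply Hu; lra). assert (v a <= v b) by (apply Hv; lra). lra. }
  assert (Hin : forall t, a <= t <= b -> A <= u t - v t <= B).
  { intros t Ht. unfold A, B.
    assert (u a <= u t) by (apply Hu; lra). assert (u t <= u b) by (apply Hu; lra).
    assert (v a <= v t) by (apply Hv; lra). assert (v t <= v b) by (apply Hv; lra). lra. }
  destruct (continuity_ab_maj (fun y => Rabs (phi y)) A B HAB) as [Mx [HMx _]].
  { intros c _. apply continuity_pt_comp with (f2 := Rabs). apply Hphi. apply Rcontinuity_abs. }
  set (M := Rabs (phi Mx)). assert (HM0 : 0 <= M) by apply Rabs_pos.
  set (TV := (u b - u a) + (v b - v a)).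
  assert (HTV : 0 <= TV).
  { unfold TV. assert (u a <= u b) by (apply Hu; lra). assert (v a <= v b) by (apply Hv; lra). lra. }
  set (e1 := eps / (4 * (b - a))).
  assert (He1 : 0 < e1) by (unfold e1; apply Rdiv_lt_0_compat; lra).
  destruct (Heine_cor2 (f:=phi) (a:=A) (b:=B) (fun x _ => Hphi x) (mkposreal e1 He1)) as [eta Heta]. simpl in Heta.
  set (K := 2 * M / eta).
  assert (HK : 0 <= K) by (unfold K; apply Rmult_le_pos; [lra|left; apply Rinv_0_lt_compat, cond_pos]).
  destruct (archimed_cor1 (eps / (4 * ((b - a) * K * TV + 1)))) as [N [HN HN0]].
  { apply Rdiv_lt_0_compat; [lra|]. assert (0 <= (b-a) * K * TV) by (apply Rmult_le_pos; [apply Rmult_le_pos|]; lra). lra. }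
  set (h := (b - a) / INR N).
  assert (HINR : 0 < INR N) by (apply lt_0_INR; lia).
  assert (Hh : 0 < h) by (unfold h; apply Rdiv_lt_0_compat; lra).
  assert (HNh : a + INR N * h = b) by (unfold h; field; lra).
  set (s := fun k : nat => a + INR k * h).
  set (W := fun k => e1 + K * ((u (s (S k)) - u (s k)) + (v (s (S k)) - v (s k)))).
  exists (h * fsum N W). split.
  2:{ rewrite <- HNh. apply approx_grid. lra.
      intros k Hk t Ht. fold (s k) in Ht |- *. fold (s (S k)) in Ht.
      assert (Hsk : a <= s k) by (unfold s; assert (0 <= INR k) by apply pos_INR; nra).
      assert (HsSk : s (S k) <= b).
      { rewrite <- HNh. unfold s. assert (INR (S k) <= INR N) by (apply le_INR; lia). nra. }
      assert (Hu1 : u (s k) <= u t) by (apply Hu; lra).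
      assert (Hu2 : u t <= u (s (S k))) by (apply Hu; lra).
      assert (Hv1 : v (s k) <= v t) by (apply Hv; lra).
      assert (Hv2 : v t <= v (s (S k))) by (apply Hv; lra).
      set (V := (u (s (S k)) - u (s k)) + (v (s (S k)) - v (s k))).
      assert (HV0 : 0 <= V) by (unfold V; lra).
      assert (Hy1 := Hin t ltac:(lra)). assert (Hy2 := Hin (s k) ltac:(lra)).
      assert (Hd : Rabs ((u t - v t) - (u (s k) - v (s k))) <= V).
      { unfold V. unfold Rabs; destruct Rcase_abs; lra. }
      unfold W. fold V.
      destruct (Rlt_le_dec V eta) as [Hs|Hb].
      - assert (Rabs (phi (u t - v t) - phi (u (s k) - v (s k))) < e1) by (apply Heta; auto; lra).
        assert (0 <= K * V) by (apply Rmult_le_pos; auto). lra.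
      - assert (B1 : Rabs (phi (u t - v t)) <= M) by (apply HMx; auto).
        assert (B2 : Rabs (phi (u (s k) - v (s k))) <= M) by (apply HMx; auto).
        assert (Hc : Rabs (phi (u t - v t) - phi (u (s k) - v (s k))) <= 2 * M).
        { revert B1 B2. generalize (phi (u t - v t)) (phi (u (s k) - v (s k))). intros X Y B1 B2.
          unfold Rminus. eapply Rle_trans. apply Rabs_triang. rewrite Rabs_Ropp. lra. }
        assert (2 * M <= K * V).
        { unfold K. assert (Heta0 := cond_pos eta).
          apply Rle_trans with (2 * M / eta * eta). right; field; lra.
          apply Rmult_le_compat_l; auto. }
        lra. }
  unfold W. rewrite fsum_plus, fsum_const, fsum_scal.
  assert (Tel : fsum N (fun k => u (s (S k)) - u (s k) + (v (s (S k)) - v (s k))) = TV).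
  { rewrite <- (fsum_ext N (fun k => (u (s (S k)) + v (s (S k))) - (u (s k) + v (s k)))).
    2: intros; ring.
    rewrite (fsum_telescope N (fun k => u (s k) + v (s k))).
    unfold s. rewrite HNh. simpl. replace (a + 0 * h) with a by ring. unfold TV. ring. }
  rewrite Tel.
  set (X := (b - a) * K * TV).
  assert (HX : 0 <= X) by (unfold X; apply Rmult_le_pos; [apply Rmult_le_pos|]; lra).
  assert (E1 : h * (INR N * e1) = eps / 4) by (unfold h, e1; field; lra).
  assert (E2 : h * (K * TV) = X * / INR N) by (unfold h, X; field; lra).
  assert (E3 : X * / INR N <= X * (eps / (4 * (X + 1)))).
  { apply Rmult_le_compat_l; auto. unfold X; lra. }
  assert (E4 : X * (eps / (4 * (X + 1))) < eps / 4).
  { apply Rmult_lt_reg_r with (4 * (X + 1)). lra.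
    replace (X * (eps / (4 * (X + 1))) * (4 * (X + 1))) with (X * eps) by (field; lra).
    replace (eps / 4 * (4 * (X + 1))) with (X * eps + eps) by (field; lra). lra. }
  rewrite Rmult_plus_distr_l. lra.
Qed.


Definition Cw (F : R -> R) (n : nat) (x : nat -> R) (i : nat) : R :=
  if lt_dec (S i) n then F ((x i + x (S i)) / 2) else 1.

Definition pw (F : R -> R) (n : nat) (x : nat -> R) (i : nat) : R :=
  match i with O => Cw F n x O | S j => Cw F n x (S j) - Cw F n x j end.

Lemma fsum_pw F n x k : fsum (S k) (pw F n x) = Cw F n x k.
Proof.
  induction k. rewrite fsum_S, fsum_0. simpl. ring.
  rewrite fsum_S, IHk. simpl. ring.
Qed.

Lemma pw_Pi F n x : is_cdf F -> (1 <= n)%nat -> in_Xi n x -> in_Pi n (pw F n x).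
Proof.
  intros HF Hn Hx. split.
  - intros i Hi. destruct i; simpl.
    + unfold Cw. destruct lt_dec. apply cdf_ge0; auto. lra.
    + unfold Cw. destruct (lt_dec (S (S i)) n); destruct (lt_dec (S i) n); try lia.
      all: try lra.
      1: assert (x i <= x (S i)) by (apply Hx; lia).
      1: assert (x (S i) <= x (S (S i))) by (apply Hx; lia).
      1: assert (F ((x i + x (S i))/2) <= F ((x (S i) + x (S (S i)))/2)) by (apply cdf_mono; auto; lra).
      1: lra.
      all: assert (F ((x i + x (S i))/2) <= 1) by (apply cdf_le1; auto); lra.
  - destruct n. lia. rewrite fsum_pw. unfold Cw. destruct lt_dec; [lia|auto].
Qed.

Lemma pw_nearest F n x t k : is_cdf F -> in_Xi n x -> 0 < t < 1 -> (k < n)%nat ->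
  fsum k (pw F n x) <= t < fsum (S k) (pw F n x) ->
  forall j, (j < n)%nat -> Rabs (quantile F t - x k) <= Rabs (quantile F t - x j).
Proof.
  intros HF Hx Ht Hk [H1 H2] j Hj.
  set (q := quantile F t).
  rewrite fsum_pw in H2.
  assert (Up : (S k < n)%nat -> q <= (x k + x (S k)) / 2).
  { intros HSk. unfold Cw in H2. destruct lt_dec; [|lia]. apply quant_le; auto. }
  assert (Lo : (0 < k)%nat -> (x (pred k) + x k) / 2 <= q).
  { intros Hk0. destruct k. lia. rewrite fsum_pw in H1. unfold Cw in H1.
    destruct lt_dec; [|lia]. simpl. apply quant_ge; auto. }
  destruct (lt_eq_lt_dec j k) as [[Hjk|Hjk]|Hjk].
  - assert (Hk0 : (0 < k)%nat) by lia. specialize (Lo Hk0).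
    assert (x j <= x (pred k)) by (apply (xi_mono n); auto; lia).
    assert (x (pred k) <= x k) by (apply (xi_mono n); auto; lia).
    unfold Rabs; repeat destruct Rcase_abs; lra.
  - subst; lra.
  - assert (HSk : (S k < n)%nat) by lia. specialize (Up HSk).
    assert (x (S k) <= x j) by (apply (xi_mono n); auto; lia).
    assert (x k <= x (S k)) by (apply (xi_mono n); auto; lia).
    unfold Rabs; repeat destruct Rcase_abs; lra.
Qed.

Lemma pw_quant F n x t : is_cdf F -> (1 <= n)%nat -> in_Xi n x -> 0 < t < 1 ->
  (forall j, (j < n)%nat ->
     Rabs (quantile (dcdf n x (pw F n x)) t - quantile F t) <= Rabs (quantile F t - x j)).
Proof.
  intros HF Hn Hx Ht j Hj.
  destruct (dcdf_quant n x (pw F n x) t Hx (pw_Pi F n x HF Hn Hx) ltac:(lra))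
    as [k [Hk [Hk' [_ Hq]]]].
  rewrite Hq. rewrite <- Rabs_Ropp. replace (- (x k - quantile F t)) with (quantile F t - x k) by ring.
  apply (pw_nearest F n x t k); auto.
Qed.

Lemma dq_mono n x p s t : in_Xi n x -> in_Pi n p -> 0 <= s -> s <= t -> t < 1 ->
  quantile (dcdf n x p) s <= quantile (dcdf n x p) t.
Proof.
  intros Hx Hp Hs Hst Ht.
  destruct (dcdf_quant n x p s Hx Hp ltac:(lra)) as [k [_ [_ [C1 E1]]]].
  destruct (dcdf_quant n x p t Hx Hp ltac:(lra)) as [l [_ [_ [C2 E2]]]].
  rewrite E1, E2. eapply qchar_mono; eauto.
Qed.


Lemma int_const_bound f c d M (pr : Riemann_integrable f c d) : c <= d ->
  (forall t, c < t < d -> f t <= M) -> RiemannInt pr <= M * (d - c).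
Proof.
  intros Hcd H. rewrite <- (RiemannInt_P15 (RiemannInt_P14 c d M)).
  apply RiemannInt_P19; auto.
Qed.

Lemma int_nonneg f c d (pr : Riemann_integrable f c d) : c <= d ->
  (forall t, c < t < d -> 0 <= f t) -> 0 <= RiemannInt pr.
Proof.
  intros Hcd H. replace 0 with (0 * (d - c)) by ring.
  rewrite <- (RiemannInt_P15 (RiemannInt_P14 c d 0)).
  apply RiemannInt_P19; auto.
Qed.

Lemma int_dom f h c d C Kr (prf : Riemann_integrable f c d) (prh : Riemann_integrable h c d) :
  c <= d -> (forall t, c < t < d -> f t <= C * (h t + Kr)) ->
  RiemannInt prf <= C * (RiemannInt prh + Kr * (d - c)).
Proof.
  intros Hcd H.
  set (p1 := RiemannInt_P14 c d 1).
  set (ph := RiemannInt_P10 Kr prh p1).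
  set (p0 := RiemannInt_P14 c d 0).
  set (pD := RiemannInt_P10 C p0 ph).
  assert (E := RiemannInt_P13 p0 ph pD).
  assert (E2 := RiemannInt_P13 prh p1 ph).
  rewrite (RiemannInt_P15 p0) in E. rewrite (RiemannInt_P15 p1) in E2.
  assert (RiemannInt prf <= RiemannInt pD).
  { apply RiemannInt_P19; auto. intros t Ht. unfold fct_cte. specialize (H t Ht). lra. }
  rewrite E2 in E. lra.
Qed.

Lemma int_le_sub f a' a b b' (pr : Riemann_integrable f a b) (pr' : Riemann_integrable f a' b') :
  a' <= a -> a <= b -> b <= b' ->
  (forall t, a' < t < b' -> 0 <= f t) -> RiemannInt pr <= RiemannInt pr'.
Proof.
  intros H1 H2 H3 H.
  set (q1 := RiemannInt_P22 pr' (conj H1 (Rle_trans _ _ _ H2 H3))).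
  set (q2 := RiemannInt_P23 pr' (conj H1 (Rle_trans _ _ _ H2 H3))).
  assert (E1 := RiemannInt_P26 q1 q2 pr').
  set (q3 := RiemannInt_P23 q2 (conj H2 H3)).
  assert (E2 := RiemannInt_P26 pr q3 q2).
  assert (0 <= RiemannInt q1) by (apply int_nonneg; auto; intros; apply H; lra).
  assert (0 <= RiemannInt q3) by (apply int_nonneg; auto; intros; apply H; lra).
  lra.
Qed.

Lemma int_split3 f a b c d (pr : Riemann_integrable f a d) : a <= b -> b <= c -> c <= d ->
  exists (p1 : Riemann_integrable f a b) (p2 : Riemann_integrable f b c) (p3 : Riemann_integrable f c d),
    RiemannInt pr = RiemannInt p1 + RiemannInt p2 + RiemannInt p3.
Proof.
  intros H1 H2 H3.
  set (q1 := RiemannInt_P22 pr (conj H1 (Rle_trans _ _ _ H2 H3))).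
  set (q2 := RiemannInt_P23 pr (conj H1 (Rle_trans _ _ _ H2 H3))).
  set (q3 := RiemannInt_P22 q2 (conj H2 H3)).
  set (q4 := RiemannInt_P23 q2 (conj H2 H3)).
  exists q1, q3, q4.
  rewrite <- (RiemannInt_P26 q1 q2 pr). rewrite <- (RiemannInt_P26 q3 q4 q2). ring.
Qed.

Lemma tail_left H J al be del (pr0 : Riemann_integrable H al be) c d (pr : Riemann_integrable H c d) :
  Int01 H J -> (forall t, 0 < t < 1 -> 0 <= H t) ->
  0 < c -> c <= d -> d <= al -> al <= be -> be < 1 -> J - del < RiemannInt pr0 ->
  RiemannInt pr <= del.
Proof.
  intros [HI1 _] Hpos Hc Hcd Hda Hab Hb Hlow.
  destruct (HI1 c be) as [prb Hprb]; try lra.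
  destruct (int_split3 _ _ _ _ _ prb Hcd Hda Hab) as [p1 [p2 [p3 E]]].
  rewrite (RiemannInt_P5 p1 pr) in E. rewrite (RiemannInt_P5 p3 pr0) in E.
  assert (0 <= RiemannInt p2) by (apply int_nonneg; auto; intros; apply Hpos; lra).
  lra.
Qed.

Lemma tail_right H J al be del (pr0 : Riemann_integrable H al be) c d (pr : Riemann_integrable H c d) :
  Int01 H J -> (forall t, 0 < t < 1 -> 0 <= H t) ->
  0 < al -> al <= be -> be <= c -> c <= d -> d < 1 -> J - del < RiemannInt pr0 ->
  RiemannInt pr <= del.
Proof.
  intros [HI1 _] Hpos Hc Hab Hbc Hcd Hd Hlow.
  destruct (HI1 al d) as [prb Hprb]; try lra.
  destruct (int_split3 _ _ _ _ _ prb Hab Hbc Hcd) as [p1 [p2 [p3 E]]].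
  rewrite (RiemannInt_P5 p1 pr0) in E. rewrite (RiemannInt_P5 p3 pr) in E.
  assert (0 <= RiemannInt p2) by (apply int_nonneg; auto; intros; apply Hpos; lra).
  lra.
Qed.

Lemma unif_supp F (x : nat -> nat -> R) : approx_supp F x ->
  forall h, 0 < h -> forall (M : nat) A, exists N1, forall n, (n >= N1)%nat ->
    forall z, in_supp F z -> A <= z <= A + INR M * h -> exists j, (j < n)%nat /\ Rabs (z - x n j) < 2 * h.
Proof.
  intros Hap h Hh. induction M; intros A.
  - destruct (classic (in_supp F A)) as [HA|HA].
    + destruct (Hap A HA (2*h) ltac:(lra)) as [N1 HN1]. exists N1. intros n Hn z Hz Hz'.
      simpl in Hz'. replace z with A by lra. auto.
    + exists O. intros n _ z Hz Hz'. simpl in Hz'. replace z with A in Hz by lra. contradiction.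
  - destruct (IHM A) as [N1 HN1].
    destruct (classic (exists y, in_supp F y /\ A + INR M * h <= y <= A + INR (S M) * h)) as [[y [Hy Hy']]|Hn].
    + destruct (Hap y Hy h Hh) as [N2 HN2]. exists (max N1 N2). intros n Hn z Hz Hz'.
      destruct (Rle_lt_dec z (A + INR M * h)).
      * apply (HN1 n ltac:(lia)); auto; lra.
      * destruct (HN2 n ltac:(lia)) as [j [Hj Hj']]. exists j. split; auto.
        rewrite S_INR in Hy', Hz'.
        assert (Rabs (z - y) <= h) by (unfold Rabs; destruct Rcase_abs; lra).
        replace (z - x n j) with ((z - y) + (y - x n j)) by ring.
        eapply Rle_lt_trans. apply Rabs_triang. lra.
    + exists N1. intros n Hn' z Hz Hz'.
      destruct (Rle_lt_dec z (A + INR M * h)).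
      * apply (HN1 n ltac:(lia)); auto; lra.
      * exfalso. apply Hn. exists z. split; auto. lra.
Qed.

Lemma nat_big L h : 0 < h -> exists M : nat, L <= INR M * h.
Proof.
  intros Hh. destruct (archimed_cor1 (h / (Rabs L + 1))) as [M [HM HM0]].
  { apply Rdiv_lt_0_compat; auto. assert (0 <= Rabs L) by apply Rabs_pos. lra. }
  exists M. assert (HI : 0 < INR M) by (apply lt_0_INR; lia).
  assert (0 <= Rabs L) by apply Rabs_pos.
  assert (L <= Rabs L) by apply Rle_abs.
  assert (Rabs L + 1 <= INR M * h).
  { apply Rmult_lt_compat_r with (r := INR M * (Rabs L + 1)) in HM.
    2: apply Rmult_lt_0_compat; lra.
    replace (/ INR M * (INR M * (Rabs L + 1))) with (Rabs L + 1) in HM by (field; lra).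
    replace (h / (Rabs L + 1) * (INR M * (Rabs L + 1))) with (INR M * h) in HM by (field; lra).
    lra. }
  lra.
Qed.


Lemma rpow_inv2 x e : 0 < e -> 0 <= x -> rpow (rpow x (1/e)) e = x.
Proof.
  intros He Hx. assert (H := rpow_inv x (1/e) ltac:(apply Rdiv_lt_0_compat; lra) Hx).
  replace (1 / (1/e)) with e in H by (field; lra). exact H.
Qed.

Definition gfun (r : R) (F : R -> R) (n : nat) (xn : nat -> R) : R -> R :=
  fun t => rpow (Rabs (quantile (dcdf n xn (pw F n xn)) t - quantile F t)) r.

Lemma gfun_int r F n xn a b : 0 < r -> is_cdf F -> (1 <= n)%nat -> in_Xi n xn ->
  0 < a -> a <= b -> b < 1 -> Riemann_integrable (gfun r F n xn) a b.
Proof.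
  intros Hr HF Hn Hx Ha Hab Hb. unfold gfun.
  apply (RI_comp (fun z => rpow (Rabs z) r)); auto.
  - apply rpow_cont; auto.
  - intros s t Hs Hst Ht. apply dq_mono; auto. apply pw_Pi; auto. lra. lra.
  - intros s t Hs Hst Ht. apply quant_mono; auto; lra.
Qed.

Lemma est r F (x : nat -> nat -> R) J : 1 <= r -> is_cdf F ->
  Int01 (fun t => rpow (Rabs (quantile F t)) r) J ->
  (forall n, (1 <= n)%nat -> in_Xi n (x n)) -> approx_supp F x ->
  forall T, 0 < T -> exists N, forall n, (n >= N)%nat -> (1 <= n)%nat /\
    forall a b (pr : Riemann_integrable (gfun r F n (x n)) a b),
      0 < a -> a <= b -> b < 1 -> RiemannInt pr <= T.
Proof.
  intros Hr HF HJ HX Hap T HT.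
  assert (Hr0 : 0 < r) by lra.
  set (H := fun t => rpow (Rabs (quantile F t)) r).
  assert (Hpos : forall t, 0 < t < 1 -> 0 <= H t) by (intros; apply rpow_nonneg).
  set (y0 := quantile F (1/2)).
  assert (Hy0 : in_supp F y0) by (apply quant_supp; auto; lra).
  destruct (Hap y0 Hy0 1 ltac:(lra)) as [N0 HN0].
  set (K := Rabs y0 + 1). set (Kr := rpow K r). set (C2 := rpow 2 r).
  assert (HKr : 0 <= Kr) by apply rpow_nonneg.
  assert (HC2 : 0 < C2) by (apply rpow_pos; lra).
  set (del := T / (8 * C2)).
  assert (Hdel : 0 < del) by (unfold del; apply Rdiv_lt_0_compat; lra).
  destruct HJ as [HJ1 HJ2].
  destruct (HJ2 del Hdel) as [al [be [Hal [Hab [Hbe [pr0 Hpr0]]]]]].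
  set (tau := Rmin (1/2) (T / (8 * C2 * (Kr + 1)))).
  assert (Htau : 0 < tau).
  { unfold tau. apply Rmin_pos. lra. apply Rdiv_lt_0_compat. lra.
    apply Rmult_lt_0_compat; lra. }
  assert (Htau2 : tau <= 1/2) by apply Rmin_l.
  assert (Htau3 : C2 * (Kr * tau) <= T / 8).
  { assert (tau <= T / (8 * C2 * (Kr + 1))) by apply Rmin_r.
    apply Rle_trans with (C2 * (Kr * (T / (8 * C2 * (Kr + 1))))).
    apply Rmult_le_compat_l; [lra|]. apply Rmult_le_compat_l; auto.
    replace (C2 * (Kr * (T / (8 * C2 * (Kr + 1))))) with (T / 8 * (Kr / (Kr + 1))) by (field; lra).
    assert (Kr / (Kr + 1) <= 1).
    { apply Rmult_le_reg_r with (Kr + 1). lra. unfold Rdiv. rewrite Rmult_assoc, Rinv_l; lra. }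
    assert (0 <= T / 8) by lra. nra. }
  set (a0 := Rmin al tau). set (b0 := Rmax be (1 - tau)).
  assert (Ha0 : 0 < a0) by (unfold a0; apply Rmin_pos; lra).
  assert (Ha0al : a0 <= al) by apply Rmin_l.
  assert (Ha0t : a0 <= tau) by apply Rmin_r.
  assert (Hb0be : be <= b0) by apply Rmax_l.
  assert (Hb0t : 1 - tau <= b0) by apply Rmax_r.
  assert (Hb0 : b0 < 1) by (unfold b0; apply Rmax_lub_lt; lra).
  set (eta := rpow (T/2) (1/r)).
  assert (Heta : 0 < eta) by (apply rpow_pos; lra).
  assert (Heta_r : rpow eta r = T/2) by (apply rpow_inv2; lra).
  set (A := quantile F a0). set (B := quantile F b0).
  destruct (nat_big (B - A) (eta/2) ltac:(lra)) as [M HM].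
  destruct (unif_supp F x Hap (eta/2) ltac:(lra) M A) as [N1 HN1].
  exists (max N0 (max N1 1)). intros n Hn. split. lia.
  intros a b pr Ha Hab' Hb.
  assert (Hn1 : (1 <= n)%nat) by lia.
  assert (Hx := HX n Hn1).
  set (G := gfun r F n (x n)).
  destruct (HN0 n ltac:(lia)) as [j0 [Hj0 Hj0']].
  assert (Hxj0 : Rabs (x n j0) <= K).
  { unfold K. replace (x n j0) with (y0 - (y0 - x n j0)) by ring.
    unfold Rminus at 1. eapply Rle_trans. apply Rabs_triang. rewrite Rabs_Ropp. lra. }
  assert (Gpt : forall t j, 0 < t < 1 -> (j < n)%nat -> G t <= rpow (Rabs (quantile F t - x n j)) r).
  { intros t j Ht Hj. unfold G, gfun. apply rpow_le; auto. apply Rabs_pos.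
    apply pw_quant; auto. }
  assert (Gdom : forall t, 0 < t < 1 -> G t <= C2 * (H t + Kr)).
  { intros t Ht. eapply Rle_trans. apply (Gpt t j0 Ht Hj0).
    eapply Rle_trans. apply rpow_diff_bound; auto.
    apply Rmult_le_compat_l; [lra|]. unfold H.
    assert (rpow (Rabs (x n j0)) r <= Kr) by (apply rpow_le; auto; apply Rabs_pos). lra. }
  assert (Gnn : forall t, 0 < t < 1 -> 0 <= G t) by (intros; apply rpow_nonneg).
  assert (Gmid : forall t, a0 <= t <= b0 -> G t <= T/2).
  { intros t Ht. assert (Ht' : 0 < t < 1) by lra.
    assert (HA : A <= quantile F t) by (apply quant_mono; auto; lra).
    assert (HB : quantile F t <= B) by (apply quant_mono; auto; lra).
    destruct (HN1 n ltac:(lia) (quantile F t) (quant_supp F HF t Ht') ltac:(lra)) as [j [Hj Hj']].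
    eapply Rle_trans. apply (Gpt t j Ht' Hj). rewrite <- Heta_r.
    apply rpow_le; auto. apply Rabs_pos. lra. }
  set (a' := Rmin a a0). set (b' := Rmax b b0).
  assert (Ha' : 0 < a') by (unfold a'; apply Rmin_pos; lra).
  assert (Ha'1 : a' <= a) by apply Rmin_l. assert (Ha'2 : a' <= a0) by apply Rmin_r.
  assert (Hb'1 : b <= b') by apply Rmax_l. assert (Hb'2 : b0 <= b') by apply Rmax_r.
  assert (Hb' : b' < 1) by (unfold b'; apply Rmax_lub_lt; lra).
  assert (Ha0b0 : a0 <= b0) by lra.
  set (prbig := gfun_int r F n (x n) a' b' Hr0 HF Hn1 Hx Ha' ltac:(lra) Hb').
  assert (S1 : RiemannInt pr <= RiemannInt prbig).
  { apply int_le_sub; auto. intros; apply Gnn; lra. }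
  destruct (int_split3 _ _ _ _ _ prbig Ha'2 Ha0b0 Hb'2) as [p1 [p2 [p3 E]]].
  assert (M2 : RiemannInt p2 <= T / 2).
  { eapply Rle_trans. apply int_const_bound; auto. intros t Ht. apply Gmid. lra.
    assert (b0 - a0 <= 1) by lra. assert (0 <= T/2) by lra. nra. }
  destruct (HJ1 a' a0 Ha' Ha'2 ltac:(lra)) as [q1 _].
  destruct (HJ1 b0 b' ltac:(lra) Hb'2 Hb') as [q3 _].
  assert (T1 : RiemannInt q1 <= del).
  { apply (tail_left H J al be del pr0 a' a0 q1); auto; try lra. split; auto. }
  assert (T3 : RiemannInt q3 <= del).
  { apply (tail_right H J al be del pr0 b0 b' q3); auto; try lra. split; auto. }
  assert (M1 : RiemannInt p1 <= C2 * (RiemannInt q1 + Kr * (a0 - a'))).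
  { apply int_dom; auto. intros t Ht. apply Gdom. lra. }
  assert (M3 : RiemannInt p3 <= C2 * (RiemannInt q3 + Kr * (b' - b0))).
  { apply int_dom; auto. intros t Ht. apply Gdom. lra. }
  assert (Z1 : C2 * (RiemannInt q1 + Kr * (a0 - a')) <= T / 4).
  { assert (C2 * RiemannInt q1 <= C2 * del) by (apply Rmult_le_compat_l; lra).
    assert (C2 * del = T / 8) by (unfold del; field; lra).
    assert (Kr * (a0 - a') <= Kr * tau) by (apply Rmult_le_compat_l; lra).
    assert (C2 * (Kr * (a0 - a')) <= C2 * (Kr * tau)) by (apply Rmult_le_compat_l; lra).
    lra. }
  assert (Z3 : C2 * (RiemannInt q3 + Kr * (b' - b0)) <= T / 4).
  { assert (C2 * RiemannInt q3 <= C2 * del) by (apply Rmult_le_compat_l; lra).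
    assert (C2 * del = T / 8) by (unfold del; field; lra).
    assert (Kr * (b' - b0) <= Kr * tau) by (apply Rmult_le_compat_l; lra).
    assert (C2 * (Kr * (b' - b0)) <= C2 * (Kr * tau)) by (apply Rmult_le_compat_l; lra).
    lra. }
  subst G. lra.
Qed.


Lemma dir2 (r : R) (F : R -> R) (x : nat -> nat -> R) (m : nat -> R) :
  1 <= r -> in_Pr r F ->
  (forall n, (1 <= n)%nat -> in_Xi n (x n)) ->
  (forall n, (1 <= n)%nat -> is_min_dist r n (x n) F (m n)) ->
  approx_supp F x -> Un_cv m 0.
Proof.
  intros Hr [HF [J HJ]] HX Hmin Hap eps Heps.
  assert (Hr0 : 0 < r) by lra.
  set (T := rpow (eps/2) r). assert (HT : 0 < T) by (apply rpow_pos; lra).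
  destruct (est r F x J Hr HF HJ HX Hap T HT) as [N HN]. exists N. intros n Hn.
  destruct (HN n Hn) as [Hn1 Hb]. clear HN.
  assert (Hx := HX n Hn1).
  set (p := pw F n (x n)).
  assert (Hp : in_Pi n p) by (apply pw_Pi; auto).
  set (S := fun y => exists a b (pr : Riemann_integrable (gfun r F n (x n)) a b),
              0 < a /\ a <= b /\ b < 1 /\ y = RiemannInt pr).
  assert (HS0 : S 0).
  { exists (1/2), (1/2), (gfun_int r F n (x n) (1/2) (1/2) Hr0 HF Hn1 Hx ltac:(lra) ltac:(lra) ltac:(lra)).
    split; [lra|split; [lra|split; [lra|]]]. rewrite RiemannInt_P9. reflexivity. }
  assert (HSb : bound S).
  { exists T. intros y [a [b [pr [H1 [H2 [H3 H4]]]]]]. subst. apply Hb; auto. }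
  destruct (completeness S HSb (ex_intro _ 0 HS0)) as [I [HI1 HI2]].
  assert (HI0 : 0 <= I) by (apply HI1; auto).
  assert (HIT : I <= T).
  { apply HI2. intros y [a [b [pr [H1 [H2 [H3 H4]]]]]]. subst. apply Hb; auto. }
  assert (Hd : dr r (dcdf n (x n) p) F (rpow I (1/r))).
  { exists I. split; auto. split.
    - intros a b Ha Hab Hb1. exists (gfun_int r F n (x n) a b Hr0 HF Hn1 Hx Ha Hab Hb1).
      apply HI1. do 3 eexists. split; [eauto|split; [eauto|split; [eauto|reflexivity]]].
    - intros e He. apply NNPP. intros Hno.
      assert (is_upper_bound S (I - e)).
      { intros y [a [b [pr [H1 [H2 [H3 H4]]]]]]. subst.
        destruct (Rle_lt_dec (RiemannInt pr) (I - e)); auto. exfalso. apply Hno.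
        exists a, b. split; auto. split; auto. split; auto. exists pr. auto. }
      specialize (HI2 _ H). lra. }
  destruct (Hmin n Hn1) as [[p' [d' [Hp' [Hd' Hmd]]]] Hle].
  specialize (Hle p (rpow I (1/r)) Hp Hd).
  assert (0 <= m n) by (destruct Hd' as [I' [_ E]]; rewrite Hmd, E; apply rpow_nonneg).
  assert (rpow I (1/r) <= eps/2).
  { replace (eps/2) with (rpow T (1/r)). apply rpow_le; auto. apply Rdiv_lt_0_compat; lra.
    unfold T. apply rpow_inv; lra. }
  unfold R_dist. rewrite Rminus_0_r, Rabs_pos_eq by auto. lra.
Qed.

Theorem theorem5p3 (r : R) (F : R -> R) (x : nat -> nat -> R) (m : nat -> R) :
  1 <= r ->
  in_Pr r F ->
  (forall n, (1 <= n)%nat -> in_Xi n (x n)) ->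
  (forall n, (1 <= n)%nat -> is_min_dist r n (x n) F (m n)) ->
  (Un_cv m 0 <-> approx_supp F x) /\
  (Un_cv (fun n => F (x n O) + maxgap n (x n) + 1 - F (x n (Nat.pred n))) 0 ->
     approx_supp F x).
Proof.
  intros Hr HP HX Hmin. assert (HF : is_cdf F) by (destruct HP; auto).
  split. split.
  - apply (dir1 r F x m); auto.
  - apply (dir2 r F x m); auto.
  - apply part2; auto.
Qed.
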